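(* Let $\boldsymbol{\tau}=(\tau_n\colon\mathcal{A}_{n+1}^+\to\mathcal{A}_n^+)_{n\in\mathbb{N}}$ be an everywhere growing and proper directive sequence. For $n\in\mathbb{N}$ let $\tilde{\mathcal{A}}_n=\mathcal{A}_n\cap\mathcal{L}(X^{(n)}_{\boldsymbol{\tau}})$ and let $\tilde\tau_n$ be the restriction of $\tau_n$ to $\tilde{\mathcal{A}}_{n+1}^+$. Then each $\tilde\tau_n$ takes values in $\tilde{\mathcal{A}}_n^+$, the directive sequence $\tilde{\boldsymbol{\tau}}=(\tilde\tau_n\colon\tilde{\mathcal{A}}_{n+1}^+\to\tilde{\mathcal{A}}_n^+)_{n\in\mathbb{N}}$ is letter-onto, and $X^{(n)}_{\tilde{\boldsymbol{\tau}}}=X^{(n)}_{\boldsymbol{\tau}}$ for every $n\in\mathbb{N}$. Conversely, if $\boldsymbol{\tau}$ is letter-onto, then $\mathcal{A}_n\subseteq\mathcal{L}(X^{(n)}_{\boldsymbol{\tau}})$ for every $n\in\mathbb{N}$.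
   Context: An alphabet is a finite set; $\mathcal{A}^+$ is the set of nonempty finite words. A morphism $\sigma\colon\mathcal{A}^+\to\mathcal{B}^+$ is a semigroup homomorphism; proper if there are letters $u,v$ such that every $\sigma(a)$ starts with $u$ and ends with $v$; letter-onto if every $b\in\mathcal{B}$ occurs in some $\sigma(a)$. For a directive sequence $\boldsymbol{\tau}=(\tau_n\colon\mathcal{A}_{n+1}^+\to\mathcal{A}_n^+)$, $\tau_{[n,N)}=\tau_n\circ\cdots\circ\tau_{N-1}$, the $n$th level is $X^{(n)}_{\boldsymbol{\tau}}=\{x\in\mathcal{A}_n^{\mathbb{Z}}:\forall\ell,\ x_{[-\ell,\ell]}$ occurs in $\tau_{[n,N)}(a)$ for some $N>n,a\in\mathcal{A}_N\}$. The sequence is everywhere growing if $\min_{a\in\mathcal{A}_N}|\tau_{[0,N)}(a)|\to\infty$, and proper / letter-onto if each $\tau_n$ is. The language $\mathcal{L}(X)$ of a subshift $X$ is the set of finite words occurring in some point of $X$ (so $\mathcal{A}_n\cap\mathcal{L}(X)$ is the set of letters occurring in points of $X$). *)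

(* Defs.v *)
From mathcomp Require Import all_boot all_algebra.
From mathcomp Require Import boolp.
Set Implicit Arguments. Unset Strict Implicit. Unset Printing Implicit Defensive.
Import GRing.Theory Num.Theory.

Section Directive.
Variable A : nat -> finType.
Variable tau : forall n, A n.+1 -> seq (A n).

Definition subst n (w : seq (A n.+1)) : seq (A n) := flatten (map (@tau n) w).

Fixpoint tau_range (n k : nat) : seq (A (k + n)) -> seq (A n) :=
  match k return seq (A (k + n)) -> seq (A n) with
  | 0 => fun w => w
  | k'.+1 => fun w => @tau_range n k' (@subst (k' + n) w)
  end.

Definition nonerasing := forall n (a : A n.+1), tau a != [::].

Definition proper_dir :=
  forall n, exists u v : A n, forall a : A n.+1,
    head u (tau a) = u /\ last v (tau a) = v /\ tau a != [::].

Definition letter_onto :=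
  forall n (b : A n), exists a : A n.+1, b \in tau a.

Definition everywhere_growing :=
  forall M : nat, exists N0 : nat, forall N, N0 <= N ->
    forall a : A (N + 0), M <= size (@tau_range 0 N [:: a]).

Definition window n (x : int -> A n) (l : nat) : seq (A n) :=
  [seq x (i%:Z - l%:Z)%R | i <- iota 0 (2 * l + 1)].

Definition inX n (x : int -> A n) : Prop :=
  forall l : nat, exists k : nat, exists a : A (k + n),
    0 < k /\ infix (window x l) (@tau_range n k [:: a]).

Definition inL n (b : A n) : Prop :=
  exists x : int -> A n, inX x /\ exists i : int, x i = b.

End Directive.

Definition Atil (A : nat -> finType) (tau : forall n, A n.+1 -> seq (A n))
  (n : nat) : finType :=
  {a : A n | `[< inL tau a >]}.

(* Main.v *)
Require Import Defs.
From mathcomp Require Import all_boot all_algebra.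
From mathcomp Require Import boolp.
From mathcomp Require Import zify.
Set Implicit Arguments. Unset Strict Implicit. Unset Printing Implicit Defensive.
Lemma split_mem (T : eqType) (x : T) s : x \in s -> exists p q, s = p ++ x :: q.
Proof. by case/splitPr => p q; exists p, q. Qed.

Section Pos.
Variables (T U : Type) (g : T -> seq U).
Local Notation F p := (flatten (map g p)).

Lemma F_cat (p q : seq T) : F (p ++ q) = F p ++ F q.
Proof. by rewrite map_cat flatten_cat. Qed.

Lemma flat_pos V i : i < size (F V) -> exists p c q j,
  V = p ++ c :: q /\ j < size (g c) /\ i = size (F p) + j.
Proof.
elim: V i => [|c V IH] i //= h.
rewrite size_cat in h; case: (ltnP i (size (g c))) => hi.
  by exists [::], c, V, i.
have hh : i - size (g c) < size (F V) by lia.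
have [p [c' [q [j [e [h1 h2]]]]]] := IH _ hh.
exists (c :: p), c', q, j; rewrite e; split=> //; split=> //=.
by rewrite size_cat; lia.
Qed.

Lemma F_size_le B p : (forall c, size (g c) <= B) -> size (F p) <= B * size p.
Proof.
move=> hB; elim: p => [|c p IH] //=; rewrite size_cat mulnS.
by apply: leq_add.
Qed.

Lemma F_size_ge p : (forall c, 0 < size (g c)) -> size p <= size (F p).
Proof.
move=> h; elim: p => [|c p IH] //=; rewrite size_cat.
by have := h c; lia.
Qed.

Lemma loc B V s u w v t m :
  (forall c, 0 < size (g c) <= B) ->
  F V = s ++ u ++ w ++ v ++ t -> 0 < size w ->
  B * m.+1 <= size u -> B * m.+2 <= size v ->
  exists p c q j, V = p ++ c :: q /\ j < size (g c) /\ m < size p /\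
    m < size q /\ drop j (g c ++ F q) = w ++ v ++ t.
Proof.
move=> hB e hw hu hv.
have hB1 : forall c, size (g c) <= B by move=> c; case/andP: (hB c).
have hB0 : forall c, 0 < size (g c) by move=> c; case/andP: (hB c).
have hi : size s + size u < size (F V) by rewrite e !size_cat; lia.
have [p [c [q [j [eV [hj ei]]]]]] := flat_pos hi.
have ed : drop j (g c ++ F q) = w ++ v ++ t.
  have := congr1 (drop (size s + size u)) e.
  rewrite catA drop_size_cat ?size_cat // => H; rewrite -H.
  by rewrite eV F_cat ei addnC -drop_drop (@drop_size_cat _ _ (F p)).
exists p, c, q, j; split=> //; split=> //; split; last split=> //.
  rewrite ltnNge; apply/negP => hp.
  have h1 := F_size_le p hB1.
  have h2 : B * size p <= B * m by rewrite leq_mul2l hp orbT.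
  move: hu; rewrite mulnS; have := hB1 c; lia.
rewrite ltnNge; apply/negP => hq.
have h1 := F_size_le q hB1.
have h2 : B * size q <= B * m by rewrite leq_mul2l hq orbT.
have h3 := congr1 size ed; rewrite size_drop !size_cat in h3.
move: hv; rewrite !mulnS; have := hB1 c; lia.
Qed.


End Pos.

Lemma loc1 (T : Type) (W : eqType) (h : T -> seq W) B V s u (b : W) v t m :
  (forall c, 0 < size (h c) <= B) ->
  flatten (map h V) = s ++ u ++ [:: b] ++ v ++ t ->
  B * m.+1 <= size u -> B * m.+2 <= size v ->
  exists p c q, V = p ++ c :: q /\ b \in h c /\ m < size p /\ m < size q.
Proof.
move=> hB e hu hv.
have [p [c [q [j [eV [hj [hp [hq ed]]]]]]]] := @loc _ _ h B V s u [:: b] v t m hB e erefl hu hv.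
exists p, c, q; split=> //; split=> //.
have := congr1 (fun z => nth b z 0) ed; rewrite /= nth_drop addn0 nth_cat hj => <-.
exact: mem_nth.
Qed.

Lemma loc2 (T : Type) (W : eqType) (h : T -> seq W) B V s u (w : seq W) v t m :
  (forall c, 0 < size (h c) <= B) -> (forall c, size w <= size (h c)) ->
  flatten (map h V) = s ++ u ++ w ++ v ++ t -> 0 < size w ->
  B * m.+1 <= size u -> B * m.+2 <= size v ->
  exists p c d q, V = p ++ c :: d :: q /\ infix w (h c ++ h d) /\
    m <= size p /\ m <= size q.
Proof.
move=> hB hw e w0 hu hv.
have [p [c [q0 [j [eV [hj [hp [hq ed]]]]]]]] := @loc _ _ h B V s u w v t m hB e w0 hu hv.
case: q0 eV hq ed => [|d q] // eV hq ed.
exists p, c, d, q; split=> //; split; last by split; [exact: ltnW | ].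
have e2 : w = take (size w) (drop j (h c) ++ h d).
  have := congr1 (take (size w)) ed; rewrite take_size_cat // => E.
  rewrite -[in LHS]E /= drop_cat hj catA takel_cat //.
  by rewrite size_cat; apply: leq_trans (hw d) (leq_addl _ _).
rewrite e2; apply: infix_trans (infix_take _ _) _.
by rewrite -{2}(cat_take_drop j (h c)) -catA; apply: suffix_infix.
Qed.
Section S.
Variable A : nat -> finType.
Variable tau : forall n, A n.+1 -> seq (A n).

Definition castw m m' (e : m = m') (w : seq (A m)) : seq (A m') :=
  eq_rect m (fun k => seq (A k)) w m' e.

Lemma castw_subst m m' (p : m = m') (q : m.+1 = m'.+1) u :
  castw p (subst tau u) = subst tau (castw q u).
Proof. by case: m' / p q => q; rewrite (eq_irrelevance q erefl). Qed.

Lemma tr_subst k n (u : seq (A (k + n.+1))) (e : k + n.+1 = (k+n).+1) :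
  subst tau (tau_range tau u) = tau_range tau (k := k) (subst tau (castw e u)).
Proof.
elim: k u e => [|k IH] u e /=.
  by rewrite (eq_irrelevance e erefl).
rewrite (IH _ (addnS k n)); congr (tau_range _ _).
by rewrite (castw_subst (addnS k n) e).
Qed.

Inductive Img (N : nat) (w : seq (A N)) : forall n, seq (A n) -> Prop :=
| I0 : Img w w
| IS n v : @Img N w n.+1 v -> Img w (subst tau v).

Lemma Img_le N w n v : @Img N w n v -> n <= N.
Proof. by elim=> // m u _ /ltnW. Qed.

Lemma Img_top N w n v : @Img N (subst tau w) n v -> @Img N.+1 w n v.
Proof. elim=> [|m u _ IH]; [exact: IS (I0 _)| exact: IS]. Qed.

Lemma Img_self_gen N w n v : @Img N w n v -> forall e : n = N, castw e v = w.
Proof.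
case=> [|m u H] e; first by rewrite (eq_irrelevance e erefl).
by exfalso; have h := Img_le H; move: h; rewrite e ltnn.
Qed.

Lemma Img_self N w v : @Img N w N v -> v = w.
Proof. by move=> H; apply: (Img_self_gen H erefl). Qed.

Lemma Img_inv N w n v : @Img N w n v -> n < N ->
  exists v', @Img N w n.+1 v' /\ v = subst tau v'.
Proof. by case=> [|m u H]; [rewrite ltnn | exists u]. Qed.

Lemma Img_fun N w n v v' : @Img N w n v -> @Img N w n v' -> v = v'.
Proof.
move=> H; elim: H v' => [|m u H IH] v' H'.
  by rewrite (Img_self H').
have [u' [H1 ->]] := Img_inv H' (Img_le H).
by rewrite (IH _ H1).
Qed.

Lemma Img_trans N w M V n v : @Img N w M V -> @Img M V n v -> @Img N w n v.
Proof. by move=> H1; elim=> // m u _ IH; apply: IS. Qed.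

Lemma Img_ex N w n : n <= N -> exists v, @Img N w n v.
Proof.
move=> le; have [k ->] : exists k, n = N - k by exists (N - n); rewrite subKn.
elim: k {le} => [|k [v IH]]; first by rewrite subn0; exists w; constructor.
case: (leqP N k) => hk.
  have -> : N - k.+1 = N - k by lia.
  by exists v.
have e : N - k = (N - k.+1).+1 by lia.
move: v IH; rewrite e => v IH; exists (subst tau v); exact: IS.
Qed.

Lemma Img_split N w n v M : @Img N w n v -> n <= M -> M <= N ->
  exists V, @Img N w M V /\ @Img M V n v.
Proof.
elim=> [|m u H IH] h1 h2.
  have e : M = N by apply/eqP; rewrite eqn_leq h1 h2.
  by subst M; exists w; split; constructor.
case: (ltngtP m M) => hm.
  have [V [H1 H2]] := IH hm h2; exists V; split=> //; exact: IS.
  by move: h1; rewrite leqNgt hm.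
subst M; exists (subst tau u); split; [exact: IS | constructor].
Qed.

Lemma tr_Img k n (w : seq (A (k + n))) : @Img (k + n) w n (tau_range tau w).
Proof.
elim: k w => [|k IH] w /=; first by constructor.
apply: Img_top; exact: IH.
Qed.


Lemma subst_cat n (w1 w2 : seq (A n.+1)) :
  subst tau (w1 ++ w2) = subst tau w1 ++ subst tau w2.
Proof. by rewrite /subst map_cat flatten_cat. Qed.

Lemma tr_cat n k (w1 w2 : seq (A (k + n))) :
  tau_range tau (w1 ++ w2) = tau_range tau w1 ++ tau_range tau w2.
Proof. by elim: k w1 w2 => [|k IH] w1 w2 //=; rewrite subst_cat IH. Qed.

Lemma tr_flat n k (w : seq (A (k + n))) :
  tau_range tau w = flatten (map (fun c => tau_range tau [:: c]) w).
Proof.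
elim: w => [|c w IH]; first by elim: k => //.
by rewrite -cat1s tr_cat IH.
Qed.

Lemma Flat N n : n <= N -> exists g : A N -> seq (A n),
  (forall c, @Img N [:: c] n (g c)) /\
  (forall W V, @Img N W n V -> V = flatten (map g W)).
Proof.
move=> le; have [k eN] : exists k, N = k + n by exists (N - n); rewrite subnK.
subst N; exists (fun c => tau_range tau [:: c]); split=> [c|W V H].
  exact: tr_Img.
by rewrite -tr_flat; apply: Img_fun H (tr_Img _).
Qed.

Lemma infix_flat (T U : eqType) (g : T -> seq U) (s t : seq T) : infix s t ->
  infix (flatten (map g s)) (flatten (map g t)).
Proof.
move=> /infixP [p [q ->]]; apply/infixP.
by exists (flatten (map g p)), (flatten (map g q)); rewrite !map_cat !flatten_cat.
Qed.

Definition Lang n (w : seq (A n)) :=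
  exists N (a : A N) V, n < N /\ @Img N [:: a] n V /\ infix w V.

Lemma Lang_infix n (w w' : seq (A n)) : Lang w -> infix w' w -> Lang w'.
Proof.
move=> [N [a [V [h1 [h2 h3]]]]] h; exists N, a, V; split=> //; split=> //.
exact: infix_trans h h3.
Qed.

Lemma inX_Lang n (x : int -> A n) : inX tau x <-> forall l, Lang (window x l).
Proof.
split=> H l.
  have [k [a [k0 h]]] := H l; exists (k + n), a, (tau_range tau [:: a]).
  split; first by lia.
  by split=> //; apply: tr_Img.
have [N [a [V [h1 [h2 h3]]]]] := H l.
have [k eN] : exists k, N = k + n by exists (N - n); rewrite subnK // ltnW.
subst N; exists k, a; split; first by lia.
by rewrite -(Img_fun h2 (tr_Img _)).
Qed.

Lemma Lang_img N n (g : A N -> seq (A n)) W : n <= N ->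
  (forall W V, @Img N W n V -> V = flatten (map g W)) ->
  Lang W -> Lang (flatten (map g W)).
Proof.
move=> le hg [M [a [V [h1 [h2 h3]]]]].
have [V2 h4] := Img_ex V le.
exists M, a, V2; split; first by lia.
split; first exact: Img_trans h2 h4.
by rewrite (hg _ _ h4); apply: infix_flat.
Qed.


Lemma window_ext n (x : int -> A n) l m : exists u v,
  window x (m + l) = u ++ window x l ++ v /\ size u = m /\ size v = m.
Proof.
rewrite /window.
have -> : 2 * (m + l) + 1 = m + (2 * l + 1) + m by lia.
rewrite iotaD iotaD !map_cat -catA.
eexists; eexists; split.
  congr (_ ++ _ ++ _); rewrite add0n.
  have -> : iota m (2*l+1) = map (addn m) (iota 0 (2*l+1)) by rewrite -iotaDl addn0.
  rewrite -map_comp.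
  apply: eq_map => i /=; congr x.
  rewrite !PoszD; lia.
by split; rewrite size_map size_iota.
Qed.

Lemma window_mem n (x : int -> A n) i : exists l, x i \in window x l.
Proof.
case: i => k.
  exists k; apply/mapP; exists (2 * k); first by rewrite mem_iota; lia.
  congr x; rewrite mul2n -addnn PoszD; lia.
exists k.+1; apply/mapP; exists 0; first by rewrite mem_iota; lia.
by congr x; rewrite NegzE; lia.
Qed.

Lemma pigeon (T : finType) (Q : nat -> T -> Prop) :
  (forall m m' t, m <= m' -> Q m' t -> Q m t) ->
  (forall m, exists t, Q m t) -> exists t, forall m, Q m t.
Proof.
move=> anti H.
suff: forall s : seq T, (forall m, exists2 t, t \in s & Q m t) ->
  exists t, forall m, Q m t.
  by apply=> m; have [t ht] := H m; exists t; rewrite ?mem_enum.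
elim=> [|t0 s IH] Hs; first by have [] := Hs 0.
case: (pselect (forall m, Q m t0)) => [h|]; first by exists t0.
move=> /existsNP [m0 hm0]; apply: IH => m.
have [t ht hq] := Hs (maxn m m0).
move: ht; rewrite inE => /orP [/eqP et|ht].
  subst t; case: hm0; apply: anti hq; exact: leq_maxr.
by exists t => //; apply: anti hq; exact: leq_maxl.
Qed.


Definition Ext n (w : seq (A n)) m :=
  exists u v, Lang (u ++ w ++ v) /\ m <= size u /\ m <= size v.

Lemma Ext_anti n (w : seq (A n)) m m' : m <= m' -> Ext w m' -> Ext w m.
Proof.
move=> h [u [v [h1 [h2 h3]]]]; exists u, v; split=> //; split; exact: leq_trans h _.
Qed.

Lemma Ext_grow n (b : A n) u v : (forall m, Ext (u ++ b :: v) m) ->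
  exists cd : A n * A n, forall m, Ext (cd.1 :: u ++ b :: rcons v cd.2) m.
Proof.
move=> H; apply: pigeon => [m m' t h|m]; first exact: Ext_anti.
have [u' [v' [h1 [h2 h3]]]] := H m.+1.
case/lastP: u' h1 h2 => [|u'' c] h1 h2; first by [].
case: v' h1 h3 => [|d v''] h1 h3; first by [].
exists (c, d), u'', v''; split; last by rewrite size_rcons in h2; split.
by move: h1; rewrite /= -cats1 -!catA /= -cats1 -!catA.
Qed.

Section Konig.
Variable n : nat.
Variable b : A n.
Hypothesis Hb : forall m, Ext [:: b] m.

Definition good (p : seq (A n) * seq (A n)) :=
  `[< forall m, Ext (p.1 ++ b :: p.2) m >].

Definition next (p : seq (A n) * seq (A n)) :=
  if [pick cd : A n * A n | good (cd.1 :: p.1, rcons p.2 cd.2)] is Some cd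
  then (cd.1 :: p.1, rcons p.2 cd.2) else p.

Definition U l := iter l next ([::], [::]).

Lemma next_good p : good p -> exists cd : A n * A n,
  next p = (cd.1 :: p.1, rcons p.2 cd.2) /\ good (next p).
Proof.
move=> /asboolP g; rewrite /next; case: pickP => [cd hcd|none].
  by exists cd.
have [cd hcd] := Ext_grow g.
by move: (none cd); rewrite /good; move/asboolP: hcd => ->.
Qed.

Lemma U_good l : good (U l).
Proof.
elim: l => [|l IH]; first by apply/asboolP => m; exact: Hb.
by have [cd [_ h]] := next_good IH.
Qed.

Lemma U_step l : exists cd : A n * A n,
  U l.+1 = (cd.1 :: (U l).1, rcons (U l).2 cd.2).
Proof. by have [cd [h _]] := next_good (U_good l); exists cd. Qed.

Lemma U_size l : size (U l).1 = l /\ size (U l).2 = l.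
Proof.
elim: l => [|l [h1 h2]] //; have [cd ->] := U_step l.
by rewrite /= size_rcons h1 h2.
Qed.

Lemma U_prefix k l : k <= l -> exists pre post,
  (U l).1 = pre ++ (U k).1 /\ (U l).2 = (U k).2 ++ post.
Proof.
elim: l => [|l IH] h.
  by move: h; rewrite leqn0 => /eqP ->; exists [::], [::]; rewrite cats0.
case: (ltnP k l.+1) => hk; last first.
  have -> : k = l.+1 by apply/eqP; rewrite eqn_leq h hk.
  by exists [::], [::]; rewrite cats0.
have [pre [post [e1 e2]]] := IH hk.
have [cd ->] := U_step l.
by exists (cd.1 :: pre), (rcons post cd.2); rewrite /= e1 e2 rcons_cat.
Qed.

Definition xK (i : int) : A n :=
  match i with
  | Posz j => nth b (b :: (U j).2) j
  | Negz j => nth b (U j.+1).1 0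
  end.

Lemma xK_window l : window xK l = (U l).1 ++ b :: (U l).2.
Proof.
have [s1 s2] := U_size l.
apply: (@eq_from_nth _ b).
  by rewrite size_map size_iota size_cat /= s1 s2; lia.
rewrite size_map size_iota => i hi.
rewrite (nth_map 0); last by rewrite size_iota.
rewrite nth_iota // add0n.
case: (ltngtP i l) => hil.
- have e : (i%:Z - l%:Z)%R = Negz (l - i).-1 by rewrite NegzE; lia.
  rewrite e; change (xK (Negz (l-i).-1)) with (nth b (U (l - i).-1.+1).1 0).
  have -> : (l - i).-1.+1 = l - i by lia.
  have [pre [post [e1 _]]] := U_prefix (leq_subr i l).
  have [t1 _] := U_size (l - i).
  have sp : size pre = i by move: (congr1 size e1); rewrite size_cat t1 s1; lia.
  by rewrite nth_cat s1 hil e1 nth_cat sp ltnn subnn.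
- have e : (i%:Z - l%:Z)%R = Posz (i - l) by lia.
  rewrite e nth_cat s1 ltnNge (ltnW hil) /=.
  have -> : i - l = (i - l).-1.+1 by lia.
  change (xK (Posz (i - l).-1.+1)) with (nth b (b :: (U (i - l).-1.+1).2) (i - l).-1.+1).
  rewrite /=.
  have hh : (i - l).-1.+1 <= l by lia.
  have [pre [post [_ e2]]] := U_prefix hh.
  have [_ t2] := U_size (i - l).-1.+1.
  rewrite e2 nth_cat t2.
  have -> : (i - l).-1 < (i - l).-1.+1 by [].
  by [].
- subst i; have e : (l%:Z - l%:Z)%R = Posz 0 by lia.
  by rewrite e nth_cat s1 ltnn subnn.
Qed.

Lemma Konig : inL tau b.
Proof.
exists xK; split; last by exists 0%R.
apply/inX_Lang => l.
move: (U_good l) => /asboolP /(_ 0) [u [v [h _]]].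
apply: Lang_infix h _; rewrite xK_window; exact: infix_infix.
Qed.

End Konig.


Lemma X_Ext n (x : int -> A n) : inX tau x -> forall l m, Ext (window x l) m.
Proof.
move=> /inX_Lang H l m; have [u [v [e [su sv]]]] := window_ext x l m.
by exists u, v; rewrite -e su sv; split=> //; apply: H.
Qed.

Lemma inL_Ext n (b : A n) : inL tau b -> forall m, Ext [:: b] m.
Proof.
move=> [x [hx [i hi]]] m; have [l hl] := window_mem x i.
move: hl; rewrite hi => /split_mem [p [q hw]].
have [u [v [h [su sv]]]] := X_Ext hx l m.
exists (u ++ p), (q ++ v); split; last by rewrite !size_cat; lia.
by move: h; rewrite hw -!catA.
Qed.

Definition Kc i := \max_(c : A i.+1) size (tau c).

Lemma Kc_ge i (c : A i.+1) : size (tau c) <= Kc i.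
Proof. exact: (leq_bigmax (F := fun c => size (tau c))). Qed.

Hypothesis ne : nonerasing tau.

Lemma tau_pos i (c : A i.+1) : 0 < size (tau c).
Proof. by rewrite lt0n size_eq0; apply: ne. Qed.

Lemma Img_size_ge N W n V : @Img N W n V -> size W <= size V.
Proof.
elim=> // m v _ IH; apply: leq_trans IH _.
exact: (F_size_ge (g := @tau m)) (@tau_pos m).
Qed.

Definition Pr n N := \prod_(n <= i < N) Kc i.

Lemma Img_size_le N W n V : @Img N W n V -> size V <= Pr n N * size W.
Proof.
elim=> [|m v H IH]; first by rewrite /Pr big_geq // mul1n.
rewrite /Pr big_ltn; last exact: Img_le H.
rewrite -mulnA; apply: leq_trans (F_size_le _ (@Kc_ge m)) _.
by rewrite leq_mul2l IH orbT.
Qed.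

Lemma Img1 n (W : seq (A n.+1)) V : @Img n.+1 W n V -> V = flatten (map (@tau n) W).
Proof. by move=> H; rewrite (Img_fun H (IS (I0 _))). Qed.

Lemma Img1' n (c : A n.+1) : @Img n.+1 [:: c] n (tau c).
Proof. by have := IS (I0 [:: c]); rewrite /subst /= cats0. Qed.

Lemma Lang_of_Img N (a : A N) n V : @Img N [:: a] n V -> 1 < size V -> Lang V.
Proof.
move=> H hs; have := Img_le H; rewrite leq_eqVlt => /orP [/eqP e|hn].
  by subst n; move: hs; rewrite (Img_self H).
by exists N, a, V; split=> //; split=> //; apply: infix_refl.
Qed.

Lemma tau_L n (a : A n.+1) b : inL tau a -> b \in tau a -> inL tau b.
Proof.
move=> ha /split_mem [p [q ea]]; apply: Konig => m.
have [u [v [h [su sv]]]] := inL_Ext ha m.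
have := Lang_img (leqnSn n) (@Img1 n) h.
rewrite !map_cat !flatten_cat /= ea => h2.
exists (flatten (map (@tau n) u) ++ p), (q ++ flatten (map (@tau n) v)).
split; first by move: h2; rewrite -!catA.
have h3 := F_size_ge u (@tau_pos n); have h4 := F_size_ge v (@tau_pos n).
by rewrite !size_cat; lia.
Qed.

Lemma L_up n (b : A n) : inL tau b -> exists a : A n.+1, inL tau a /\ b \in tau a.
Proof.
move=> hb.
suff [a ha] : exists a : A n.+1, forall m, b \in tau a /\ Ext [:: a] m.
  exists a; split; last by case: (ha 0).
  by apply: Konig => m; case: (ha m).
apply: pigeon => [m m' a h [h1 h2]|m]; first by split=> //; apply: Ext_anti h2.
set B := Kc n.
have hB : forall c : A n.+1, 0 < size (tau c) <= B.
  by move=> c; rewrite tau_pos Kc_ge.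
have [u [v [[N [a0 [V [hN [hI hinf]]]]] [su sv]]]] := inL_Ext hb (B * m.+2).
have [V' [hI' eV]] := Img_inv hI hN.
move/infixP: hinf => [s [t eVs]].
have e : flatten (map (@tau n) V') = s ++ u ++ [:: b] ++ v ++ t.
  by rewrite -/(subst tau V') -eV eVs -!catA.
have hu : B * m.+1 <= size u by apply: leq_trans su; rewrite leq_mul2l ltnW ?orbT.
have [p [c [q [eV' [hbc [hp hq]]]]]] := loc1 hB e hu sv.
exists c; split=> //; exists p, q; split; last by split; apply: ltnW.
have -> : p ++ [:: c] ++ q = V' by rewrite eV'.
apply: Lang_of_Img hI' _; rewrite eV' size_cat /=; lia.
Qed.

Lemma L_all n0 (b : A n0) : inL tau b -> forall N, n0 <= N -> exists a : A N, inL tau a.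
Proof.
move=> hb; elim=> [|N IH] h.
  by move: h; rewrite leqn0 => /eqP e; subst n0; exists b.
case: (ltnP N n0) => h2.
  have e : n0 = N.+1 by apply/eqP; rewrite eqn_leq h h2.
  by subst n0; exists b.
have [a ha] := IH h2; have [a' [ha' _]] := L_up ha; by exists a'.
Qed.


Hypothesis eg : everywhere_growing tau.
Hypothesis pr : proper_dir tau.

Lemma castw_single N N' (e : N = N') (c : A N) : exists a : A N', castw e [:: c] = [:: a].
Proof. by case: N' / e; exists c. Qed.

Lemma Img_cast N N' (e : N = N') w n v : @Img N w n v -> @Img N' (castw e w) n v.
Proof. by case: N' / e. Qed.

Lemma Grow j K : exists N, j < N /\ forall (c : A N) V, @Img N [:: c] j V -> K <= size V.
Proof.
have [N0 hN0] := eg (Pr 0 j * K + 1).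
exists (maxn N0 j.+1); split; first by rewrite leq_max leqnn orbT.
move=> c V hI.
have [V0 h0] := Img_ex V (leq0n j).
have h1 := Img_trans hI h0.
have [a ea] := castw_single (esym (addn0 (maxn N0 j.+1))) c.
have h2 := Img_cast (esym (addn0 _)) h1; rewrite ea in h2.
have h3 := hN0 (maxn N0 j.+1) (leq_maxl _ _) a.
rewrite -(Img_fun h2 (tr_Img _)) in h3.
have h4 := Img_size_le h0.
have : Pr 0 j * K < Pr 0 j * size V by lia.
by rewrite ltn_mul2l => /andP [_ /ltnW].
Qed.


Lemma infix_size (T : eqType) (s t : seq T) : infix s t -> size s <= size t.
Proof. by move/infixP => [p [q ->]]; rewrite !size_cat; lia. Qed.

Lemma LangL n (x : int -> A n) : inX tau x -> forall l, exists N (a : A N) V,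
  n < N /\ inL tau a /\ @Img N [:: a] n V /\ infix (window x l) V.
Proof.
move=> hx l; set W := window x l.
have W0 : 0 < size W by rewrite size_map size_iota addn1.
have hext := X_Ext hx l.
have [N1 [hN1 hg]] := Grow n (size W).
have [g1 [hg1 hF1]] := Flat (ltnW hN1).
set B1 := \max_(c : A N1) size (g1 c).
have hB1 : forall c, 0 < size (g1 c) <= B1.
  move=> c; apply/andP; split; first exact: (Img_size_ge (hg1 c)).
  exact: (leq_bigmax (F := fun c => size (g1 c))).
have hW : forall c, size W <= size (g1 c) := fun c => hg c _ (hg1 c).
set Q := \max_(i < N1.+1) Pr n i.
have [cd hcd] : exists cd : A N1 * A N1,
    forall m, infix W (g1 cd.1 ++ g1 cd.2) /\ Ext [:: cd.1; cd.2] m.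
  apply: pigeon => [m m' cd h [h1 h2]|m]; first by split=> //; exact: Ext_anti h2.
  have [u [v [[N2 [a2 [V2 [hN2 [hI2 hinf]]]]] [su sv]]]] := hext (B1 * m.+2 + Q).
  have hN12 : N1 < N2.
    rewrite ltnNge; apply/negP => hle.
    have h1 := Img_size_le hI2.
    have h2 : Pr n N2 <= Q.
      exact: (leq_bigmax (F := fun i : 'I_N1.+1 => Pr n i) (Ordinal (hle : N2 < N1.+1))).
    have h3 := infix_size hinf; rewrite !size_cat /= in h3, h1.
    have W0' : 0 < size (window x l) := W0; rewrite muln1 in h1; lia.
  have [V' [hI' hV']] := Img_split hI2 (ltnW hN1) (ltnW hN12).
  move/infixP: hinf => [s [t eV2]].
  have e : flatten (map g1 V') = s ++ u ++ W ++ v ++ t by rewrite -(hF1 _ _ hV') eV2 -!catA.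
  have hu : B1 * m.+1 <= size u.
    apply: leq_trans su; apply: leq_trans (leq_addr _ _); rewrite leq_mul2l ltnW ?orbT //.
  have hv : B1 * m.+2 <= size v by apply: leq_trans sv; apply: leq_addr.
  have [p [c [d [q [eV' [hw [hp hq]]]]]]] := loc2 hB1 hW e W0 hu hv.
  exists (c, d); split=> //; exists p, q; split=> //.
  have -> : p ++ [:: c; d] ++ q = V' by rewrite eV'.
  by exists N2, a2, V'; split=> //; split=> //; apply: infix_refl.
case: cd hcd => c d /= hcd.
have hWcd : infix W (flatten (map g1 [:: c; d])) by rewrite /= cats0; case: (hcd 0).
case: (pselect (forall m, exists e : A N1.+1, infix [:: c; d] (tau e) /\ Ext [:: e] m))
  => [hyes|hno].
  have [e he] : exists e : A N1.+1, forall m, infix [:: c; d] (tau e) /\ Ext [:: e] m.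
    by apply: pigeon => // m m' e h [h1 h2]; split=> //; apply: Ext_anti h2.
  have heL : inL tau e by apply: Konig => m; case: (he m).
  have [V hV] := Img_ex (tau e) (ltnW hN1).
  exists N1.+1, e, V; split; first exact: ltnW.
  split=> //; split; first exact: Img_trans (Img1' e) hV.
  rewrite (hF1 _ _ hV); apply: infix_trans hWcd (infix_flat g1 (he 0).1).
move: hno => /existsNP [m0 /forallNP hm0].
set B := Kc N1.
have hB : forall c : A N1.+1, 0 < size (tau c) <= B.
  by move=> c'; rewrite tau_pos Kc_ge.
have [u' [v' [[N4 [a4 [V4 [hN4 [hI4 hinf]]]]] [su sv]]]] := (hcd (B * m0.+2)).2.
have [V5 [hI5 eV5]] := Img_inv hI4 hN4.
move/infixP: hinf => [s [t eV4]].
have e : flatten (map (@tau N1) V5) = s ++ u' ++ [:: c; d] ++ v' ++ t.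
  by rewrite -/(subst tau V5) -eV5 eV4 -!catA.
have hu : B * m0.+1 <= size u' by apply: leq_trans su; rewrite leq_mul2l ltnW ?orbT.
have [p [e1 [q [j [eV5' [hj [hp [hq ed]]]]]]]] :=
  @loc _ _ (@tau N1) B V5 s u' [:: c; d] v' t m0 hB e erefl hu sv.
case: (ltnP j.+1 (size (tau e1))) => hj2.
  exfalso; apply: (hm0 e1); split.
    move: ed; rewrite drop_cat hj => ed.
    have -> : [:: c; d] = take 2 (drop j (tau e1)).
      have := congr1 (take 2) ed; rewrite takel_cat ?size_drop; last by lia.
      by move=> E; rewrite E /= take0.
    exact: infix_trans (infix_take _ _) (infix_drop _ _).
  exists p, q; split; last by split; apply: ltnW.
  have -> : p ++ [:: e1] ++ q = V5 by rewrite eV5'.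
  apply: Lang_of_Img hI5 _; rewrite eV5' size_cat /=; lia.
have ej : j = (size (tau e1)).-1 by lia.
have [u0 [v0 hpr]] := pr N1.
have ec : c = v0.
  have := congr1 (fun z => nth v0 z 0) ed; rewrite /= nth_drop addn0 nth_cat hj => <-.
  by rewrite ej nth_last (hpr e1).2.1.
case: q eV5' hq ed => [|e2 q'] // eV5' hq ed.
have edd : d = u0.
  have := congr1 (fun z => nth u0 z 1) ed; rewrite /= nth_drop addn1 nth_cat ltnNge hj2 /=.
  have -> : j.+1 - size (tau e1) = 0 by lia.
  by rewrite nth_cat tau_pos nth0 (hpr e2).1 => <-.
have [N3 [hN3 hg3]] := Grow N1.+1 2.
have hx0 : inL tau (x 0) by exists x; split=> //; exists 0%R.
have hnN3 : n <= N3 by lia.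
have [f hf] := L_all hx0 hnN3.
have [V3 hV3] := Img_ex [:: f] (ltnW hN3).
have s3 := hg3 f V3 hV3.
case: V3 hV3 s3 => [|e3 [|e4 r]] // hV3 _.
have hI6 := Img_trans hV3 (IS (I0 _)).
have [V7 hV7] := Img_ex (subst tau (e3 :: e4 :: r)) (ltnW hN1).
exists N3, f, V7; split; first by lia.
split=> //; split; first exact: Img_trans hI6 hV7.
rewrite (hF1 _ _ hV7); apply: infix_trans hWcd (infix_flat g1 _).
rewrite /subst /= ec edd.
have [h3a [h3b h3c]] := hpr e3; have [h4a [h4b h4c]] := hpr e4.
case/lastP: (tau e3) h3b h3c => [|s1 z] // h3b _.
case: (tau e4) h4a h4c => [|z' s2] // h4a _.
rewrite last_rcons in h3b; rewrite /= in h4a; subst z z'.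
by rewrite -cats1 -!catA /=; apply: infix_infix.
Qed.


Lemma chain (lo : letter_onto tau) n (a : A n) N : n <= N ->
  exists (c : A N) V, @Img N [:: c] n V /\ a \in V.
Proof.
elim: N => [|N IH] h.
  move: h; rewrite leqn0 => /eqP e; subst n.
  by exists a, [:: a]; split; [constructor | rewrite inE].
case: (ltnP N n) => h2.
  have e : n = N.+1 by apply/eqP; rewrite eqn_leq h h2.
  by subst n; exists a, [:: a]; split; [constructor | rewrite inE].
have [c [V [hI ha]]] := IH h2.
have [c' hc'] := lo N c.
have [g [hg hF]] := Flat h2.
have [V' hV'] := Img_ex (tau c') h2.
exists c', V'; split; first exact: Img_trans (Img1' c') hV'.
rewrite (hF _ _ hV'); move: hc' => /split_mem [p [q ->]].
rewrite map_cat flatten_cat /= !mem_cat.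
by move: ha; rewrite (hF _ _ hI) /= cats0 => ->; rewrite orbT.
Qed.

Lemma part2 (lo : letter_onto tau) n (a : A n) : inL tau a.
Proof.
apply: Konig => m.
have [N1 [hN1 hg]] := Grow n m.
have [g1 [hg1 hF1]] := Flat (ltnW hN1).
have [c [V [hI ha]]] := chain lo a (ltnW hN1).
have hac : a \in g1 c by move: ha; rewrite (hF1 _ _ hI) /= cats0.
suff [p [q [hp [hq hL]]]] : exists p q, p != [::] /\ q != [::] /\ Lang (p ++ [:: c] ++ q).
  have := Lang_img (ltnW hN1) hF1 hL.
  rewrite !map_cat !flatten_cat /= cats0.
  move/split_mem: hac => [s1 [s2 ->]] h.
  exists (flatten (map g1 p) ++ s1), (s2 ++ flatten (map g1 q)); split.
    by move: h; rewrite -!catA.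
  case: p q hp hq {h hL} => [|p0 p] // [|q0 q] // _ _.
  have h1 := hg p0 _ (hg1 p0); have h2 := hg q0 _ (hg1 q0).
  by rewrite /= !size_cat; lia.
have [c' hc'] := lo N1 c.
move/split_mem: hc' => [s [t es]].
have [u0 [v0 hpr]] := pr N1.
have hne : forall e : A N1.+1, tau e != [::] by move=> e; case: (hpr e) => _ [].
case: s es => [|s0 s] es; last case: t es => [|t0 t] es; last first.
- exists (s0 :: s), (t0 :: t); split=> //; split=> //.
  rewrite -es; apply: Lang_of_Img (Img1' c') _; rewrite es /= size_cat /=; lia.
all: have [N3 [hN3 hg3]] := Grow N1.+1 3.
all: have hnN3 : n <= N3 by lia.
all: have [f [V0 [hf _]]] := chain lo a hnN3.
all: have [V3 hV3] := Img_ex [:: f] (ltnW hN3).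
all: have s3 := hg3 f V3 hV3.
all: case: V3 hV3 s3 => [|e1 [|e2 [|e3 r]]] // hV3 _.
all: have hI6 := Img_trans hV3 (IS (I0 _)).
all: have hL6 : Lang (subst tau [:: e1, e2, e3 & r]).
all: try (apply: Lang_of_Img hI6 _; apply: leq_trans (F_size_ge _ (@tau_pos N1))).
all: try by [].
all: move: hL6; rewrite /subst /=.
all: have [h2a [h2b _]] := hpr e2.
- move: (hpr c') => [h1 [h2 _]]; rewrite es cats1 last_rcons in h2; subst c.
  case/lastP: (tau e2) h2b (hne e2) => [|s1 z] // h2b _; rewrite last_rcons in h2b; subst z.
  move=> hL; exists (tau e1 ++ s1), (tau e3); split; first by rewrite -size_eq0 size_cat -lt0n ltn_addr ?tau_pos.
  split; first exact: hne.
  by apply: Lang_infix hL _; rewrite -cats1 -!catA /=; apply/infixP; exists [::], (flatten (map (@tau N1) r)); rewrite /= -!catA.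
- move: (hpr c') => [h1 [h2 _]]; rewrite es /= in h1; subst c.
  case: (tau e2) h2a (hne e2) => [|z s1] // h2a _; rewrite /= in h2a; subst z.
  move=> hL; exists (tau e1), (s1 ++ tau e3); split; first exact: hne.
  split; first by rewrite -size_eq0 size_cat -lt0n ltn_addl ?tau_pos.
  apply: Lang_infix hL _; apply/infixP; exists [::], (flatten (map (@tau N1) r)); by rewrite /= -!catA /= -?catA.
Qed.

End S.

Lemma tr_map (A A' : nat -> finType) (tau : forall n, A n.+1 -> seq (A n))
  (tau' : forall n, A' n.+1 -> seq (A' n)) (f : forall n, A' n -> A n) :
  (forall n a, map (@f n) (tau' n a) = tau n (f _ a)) ->
  forall n k (w : seq (A' (k + n))),
  map (@f n) (tau_range tau' w) = tau_range tau (map (@f (k + n)) w).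
Proof.
move=> hf n; elim=> [|k IH] w //=; rewrite IH; congr (tau_range _ _).
rewrite /subst map_flatten -!map_comp; congr flatten; apply: eq_map => a /=.
exact: hf.
Qed.

Lemma infix_mapf (T U : eqType) (f : T -> U) s t : infix s t -> infix (map f s) (map f t).
Proof.
move/infixP => [p [q ->]]; apply/infixP; exists (map f p), (map f q).
by rewrite !map_cat.
Qed.

Lemma infix_map_inj (T U : eqType) (f : T -> U) s t : injective f ->
  infix (map f s) (map f t) -> infix s t.
Proof.
move=> injf /infixP [p [q e]]; apply/infixP.
exists (take (size p) t), (drop (size s) (drop (size p) t)).
have E : s = take (size s) (drop (size p) t).
  apply: (inj_map injf); rewrite map_take map_drop e drop_size_cat //.
  by rewrite take_size_cat // size_map.
by rewrite [X in _ ++ X ++ _]E !cat_take_drop.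
Qed.

Unset Implicit Arguments.

Theorem lemma4p6 (A : nat -> finType) (tau : forall n, A n.+1 -> seq (A n)) :
  nonerasing tau -> everywhere_growing tau -> proper_dir tau ->
  (exists tau' : forall n, Atil tau n.+1 -> seq (Atil tau n),
     (* tau' n is the restriction of tau n, so tau n maps ~A_{n+1} into ~A_n^+ *)
     (forall n (a : Atil tau n.+1), map val (tau' n a) = tau n (val a)) /\
     letter_onto tau' /\
     (forall n,
        (forall y : int -> Atil tau n, inX tau' y -> inX tau (fun i => val (y i))) /\
        (forall x : int -> A n, inX tau x ->
           exists y : int -> Atil tau n, inX tau' y /\ forall i, val (y i) = x i)))
  /\ (letter_onto tau -> forall n (a : A n), inL tau a).
Proof.
move=> ne eg pr; split; last by move=> lo n a; exact: (part2 ne eg pr lo a).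
pose tau' := fun n (a : Atil tau n.+1) => (pmap insub (tau n (val a)) : seq (Atil tau n)).
have htau' : forall n a, map val (tau' n a) = tau n (val a).
  move=> n a; rewrite /tau' (pmap_filter (@insubK _ _ _)); apply/all_filterP/allP => b hb.
  have hL : inL tau b := tau_L ne (asboolW (valP a)) hb.
  by case: insubP => //; rewrite (asboolT hL).
exists tau'; split=> //; split.
  move=> n b; have hb : inL tau (val b) := asboolW (valP b).
  have [a [ha hba]] := L_up ne hb.
  exists (exist _ a (asboolT ha)); by rewrite -(mem_map val_inj) htau'.
move=> n; split.
  move=> y hy l; have [k [a [k0 hinf]]] := hy l; exists k, (val a); split=> //.
  have -> : window (fun i => val (y i)) l = map val (window y l) by rewrite /window -map_comp.
  have := tr_map htau' [:: a]; rewrite /= => <-.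
  exact: infix_mapf.
move=> x hx; have hxL : forall i, inL tau (x i) by move=> i; exists x; split=> //; exists i.
exists (fun i => exist _ (x i) (asboolT (hxL i)) : Atil tau n); split=> // l.
have [N [a [V [hN [haL [hI hinf]]]]]] := LangL ne eg pr hx l.
have [k eN] : exists k, N = k + n by exists (N - n); rewrite subnK // ltnW.
subst N; exists k, (exist _ a (asboolT haL) : Atil tau (k + n)); split; first by lia.
apply: (infix_map_inj val_inj).
rewrite (tr_map htau') /=.
have -> : map val (window (fun i => exist _ (x i) (asboolT (hxL i)) : Atil tau n) l) = window x l.
  by rewrite /window -map_comp.
by rewrite -(Img_fun hI (tr_Img _ _)).
Qed.
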